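(* Let $H\in\mathbb{R}^{n\times n}$ be symmetric with $\lambda_{\min}(H)<0$ and unit eigenvector $v_1$ for $\lambda_{\min}(H)$, let $g\in\mathbb{R}^n$ with $g^\intercal v_1\neq0$, let $f(z)=\frac12z^\intercal Hz+g^\intercal z$ and $\beta=\|H\|_{\mathrm{op}}$. Let $0<\eta<1/\beta$ and $z_0=-\alpha\frac{g}{\|g\|}$ with $0<\alpha<\min\big(1,\frac{\|g\|^3}{|g^\intercal Hg|}\big)$, and let $z_{s+1}=z_s-\eta\nabla f(z_s)$ for $s\ge0$. Suppose $t$ is such that $\|z_s\|\le 1$ for $s=0,\dots,t$ and $z_t^\intercal\nabla f(z_t)\le 0$. Then $z_t^\intercal H\nabla f(z_t)\ge \beta\, z_t^\intercal\nabla f(z_t)$.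
   Context: $\nabla f(z)=Hz+g$; $\|H\|_{\mathrm{op}}$ is the operator norm. *)

(* Defs.v *)
From HB Require Import structures.
From mathcomp Require Import all_boot all_order all_algebra.
From mathcomp Require Import reals.
Set Implicit Arguments. Unset Strict Implicit. Unset Printing Implicit Defensive.
Import Order.TTheory GRing.Theory Num.Theory.
Local Open Scope ring_scope.

Definition dotv (R : realType) (n : nat) (u v : 'cV[R]_n) : R :=
  (u^T *m v) 0 0.
Definition vnorm (R : realType) (n : nat) (u : 'cV[R]_n) : R :=
  Num.sqrt (dotv u u).

Definition opnorm (R : realType) (n : nat) (H : 'M[R]_n) : R :=
  sup (fun r : R => exists x : 'cV[R]_n, vnorm x = 1 /\ r = vnorm (H *m x)).

(* gradient of f(z) = 1/2 z^T H z + g^T z *)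
Definition gradf (R : realType) (n : nat) (H : 'M[R]_n) (g z : 'cV[R]_n)
  : 'cV[R]_n := H *m z + g.

Fixpoint gd_iter (R : realType) (n : nat) (H : 'M[R]_n) (g z0 : 'cV[R]_n)
  (eta : R) (s : nat) : 'cV[R]_n :=
  match s with
  | O => z0
  | S s' => let z := gd_iter H g z0 eta s' in z - eta *: gradf H g z
  end.

(* Main.v *)
Require Import Defs.
From HB Require Import structures.
From mathcomp Require Import all_boot all_order all_algebra.
From mathcomp Require Import boolp classical_sets reals.
From mathcomp Require Import ring lra.
Set Implicit Arguments. Unset Strict Implicit. Unset Printing Implicit Defensive.
Import Order.TTheory GRing.Theory Num.Theory.
Local Open Scope ring_scope.

Lemma dotvC (R : realType) n (u v : 'cV[R]_n) : dotv u v = dotv v u.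
Proof.
rewrite /dotv !mxE; apply: eq_bigr => i _; by rewrite !mxE mulrC.
Qed.

Lemma dotvDr (R : realType) n (u v w : 'cV[R]_n) : dotv u (v + w) = dotv u v + dotv u w.
Proof. by rewrite /dotv mulmxDr mxE. Qed.

Lemma dotvZr (R : realType) n k (u v : 'cV[R]_n) : dotv u (k *: v) = k * dotv u v.
Proof. by rewrite /dotv -scalemxAr mxE. Qed.

Lemma dotvNr (R : realType) n (u v : 'cV[R]_n) : dotv u (- v) = - dotv u v.
Proof. by rewrite /dotv mulmxN mxE. Qed.

Lemma dotv_mul (R : realType) n (A : 'M[R]_n) (u v : 'cV[R]_n) :
  dotv u (A *m v) = dotv (A^T *m u) v.
Proof. by rewrite /dotv trmx_mul trmxK mulmxA. Qed.

Lemma dotv_ge0 (R : realType) n (u : 'cV[R]_n) : 0 <= dotv u u.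
Proof.
rewrite /dotv mxE; apply: sumr_ge0 => i _; rewrite !mxE -expr2; exact: sqr_ge0.
Qed.

Lemma dotv_eq0 (R : realType) n (u : 'cV[R]_n) : dotv u u = 0 -> u = 0.
Proof.
rewrite /dotv mxE => /psumr_eq0P H; apply/matrixP => i j; rewrite ord1 !mxE.
have /eqP := H (fun k _ => ltac:(rewrite !mxE -expr2; exact: sqr_ge0)) i isT.
by rewrite !mxE mulf_eq0 orbb => /eqP.
Qed.

Lemma hmx_sym (R : realType) n (H : 'M[R]_n.+1) (p : {poly R}) :
  H^T = H -> (horner_mx H p)^T = horner_mx H p.
Proof.
move=> HS; elim/poly_ind: p => [|p c IH]; first by rewrite rmorph0 trmx0.
rewrite rmorphD rmorphM /= horner_mx_X horner_mx_C linearD /= trmx_mul IH HS tr_scalar_mx.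
congr (_ + _); have := comm_mx_horner p (comm_mx_refl H).
by rewrite /comm_mx.
Qed.

Lemma dotvBr (R : realType) n (u v w : 'cV[R]_n) : dotv u (v - w) = dotv u v - dotv u w.
Proof. by rewrite dotvDr dotvNr. Qed.

Lemma dotvDl (R : realType) n (u v w : 'cV[R]_n) : dotv (v + w) u = dotv v u + dotv w u.
Proof. by rewrite dotvC dotvDr dotvC [dotv u w]dotvC. Qed.
Lemma dotvBl (R : realType) n (u v w : 'cV[R]_n) : dotv (v - w) u = dotv v u - dotv w u.
Proof. by rewrite dotvC dotvBr dotvC [dotv u w]dotvC. Qed.
Lemma dotvZl (R : realType) n k (u v : 'cV[R]_n) : dotv (k *: v) u = k * dotv v u.
Proof. by rewrite dotvC dotvZr dotvC. Qed.
Lemma dotvNl (R : realType) n (u v : 'cV[R]_n) : dotv (- v) u = - dotv v u.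
Proof. by rewrite dotvC dotvNr dotvC. Qed.
Lemma dotv0r (R : realType) n (u : 'cV[R]_n) : dotv u 0 = 0.
Proof. by rewrite /dotv mulmx0 mxE. Qed.
Lemma dotv0l (R : realType) n (u : 'cV[R]_n) : dotv 0 u = 0.
Proof. by rewrite dotvC dotv0r. Qed.

Lemma dotv_sym (R : realType) n (S : 'M[R]_n) (u v : 'cV[R]_n) :
  S^T = S -> dotv (S *m u) v = dotv u (S *m v).
Proof. by move=> SS; rewrite dotv_mul SS. Qed.

Definition psdp (R : realType) n (H : 'M[R]_n.+1) (p : {poly R}) :=
  forall x, 0 <= dotv x (horner_mx H p *m x).

Lemma psdD (R : realType) n (H : 'M[R]_n.+1) p q :
  psdp H p -> psdp H q -> psdp H (p + q).
Proof.
by move=> hp hq x; rewrite rmorphD /= mulmxDl dotvDr addr_ge0.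
Qed.

Lemma psdC (R : realType) n (H : 'M[R]_n.+1) k p :
  0 <= k -> psdp H p -> psdp H (k%:P * p).
Proof.
move=> hk hp x; rewrite rmorphM /= horner_mx_C -mulmxE mul_scalar_mx -scalemxAl dotvZr.
exact: mulr_ge0.
Qed.

Lemma psd1 (R : realType) n (H : 'M[R]_n.+1) : psdp H 1.
Proof. by move=> x; rewrite rmorph1 mul1mx dotv_ge0. Qed.

Lemma psd_sq (R : realType) n (H : 'M[R]_n.+1) p s :
  H^T = H -> psdp H p -> psdp H (s * p * s).
Proof.
move=> HS hp x; rewrite !rmorphM /= -!mulmxE -!mulmxA -dotv_sym ?hmx_sym //.
Qed.

Lemma psd_pow (R : realType) n (H : 'M[R]_n.+1) r p :
  H^T = H -> psdp H p -> psdp H (r * p) -> forall m, psdp H (r ^+ m * p).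
Proof.
move=> HS h0 h1.
suff: forall m, psdp H (r ^+ m * p) /\ psdp H (r ^+ m.+1 * p) by move=> h m; case: (h m).
elim=> [|m [IH0 IH]]; first by rewrite expr0 mul1r expr1.
split=> //.
have -> : r ^+ m.+2 * p = r * (r ^+ m * p) * r by rewrite !exprS; ring.
exact: psd_sq.
Qed.

Fixpoint cpoly (R : realType) (a eta : R) (t : nat) : {poly R} :=
  match t with
  | O => a%:P
  | S t' => (1 - eta%:P * 'X) * cpoly a eta t' + eta%:P
  end.

Lemma psd_c (R : realType) n (H : 'M[R]_n.+1) a eta p :
  0 <= a -> 0 <= eta ->
  (forall m, psdp H ((1 - eta%:P * 'X) ^+ m * p)) ->
  forall t k, psdp H (cpoly a eta t * (1 - eta%:P * 'X) ^+ k * p).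
Proof.
move=> ha he hm; elim=> [|t IH] k /=.
  by rewrite -mulrA; apply: psdC.
have -> : ((1 - eta%:P * 'X) * cpoly a eta t + eta%:P) * (1 - eta%:P * 'X) ^+ k * p
  = cpoly a eta t * (1 - eta%:P * 'X) ^+ k.+1 * p + eta%:P * ((1 - eta%:P * 'X) ^+ k * p).
  by rewrite exprS; ring.
by apply: psdD; [apply: IH | apply: psdC].
Qed.

Lemma u_closed (R : realType) (a eta : R) t :
  1 - 'X * cpoly a eta t = (1 - eta%:P * 'X) ^+ t * (1 - a%:P * 'X).
Proof.
elim: t => [|t IH] /=; first by rewrite expr0 mul1r mulrC.
by rewrite exprS -mulrA -IH; ring.
Qed.

Lemma opnorm_pos (R : realType) n (H : 'M[R]_n) (eta : R) :
  0 < eta -> eta < 1 / opnorm H -> 0 < opnorm H.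
Proof.
move=> he hlt; rewrite ltNge; apply/negP => hb.
have : 1 / opnorm H <= 0 by rewrite mul1r invr_le0.
by move=> h; have := lt_le_trans (lt_trans he hlt) h; rewrite ltxx.
Qed.

Lemma opnorm_psd (R : realType) n (H : 'M[R]_n.+1) (eta : R) :
  H^T = H -> 0 < eta -> eta < 1 / opnorm H -> psdp H ((opnorm H)%:P - 'X).
Proof.
move=> HS he hlt.
have bpos := opnorm_pos he hlt.
set b := opnorm H in bpos *.
set E := (fun r : R => exists x : 'cV[R]_n.+1, vnorm x = 1 /\ r = vnorm (H *m x)).
have hs : has_sup E.
  apply: contrapT => hn; move: bpos; rewrite /b /opnorm -/E sup_out //.
  by rewrite ltxx.
have key : forall y : 'cV[R]_n.+1, vnorm y = 1 -> dotv y (H *m y) <= b.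
  move=> y hy.
  have hE : vnorm (H *m y) <= b by apply: (sup_upper_bound hs); exists y.
  have hyy : dotv y y = 1.
    by move: hy; rewrite /vnorm => /(congr1 (fun r => r ^+ 2)); rewrite sqr_sqrtr ?dotv_ge0 // expr1n.
  have hHH : dotv (H *m y) (H *m y) <= b ^+ 2.
    rewrite -[dotv _ _]sqr_sqrtr ?dotv_ge0 //; rewrite -/(vnorm _).
    by rewrite lerXn2r ?nnegrE ?sqrtr_ge0 // ltW.
  have h0 := dotv_ge0 (b *: y - H *m y).
  rewrite dotvBl !dotvBr !dotvZl !dotvZr [dotv (H *m y) y]dotvC hyy in h0.
  nra.
move=> x; rewrite rmorphB /= horner_mx_C horner_mx_X mulmxBl mul_scalar_mx dotvBr dotvZr.
have [hx0|hx0] := eqVneq (dotv x x) 0.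
  by rewrite (dotv_eq0 hx0) mulmx0 !dotv0r mulr0 subrr.
have dpos : 0 < dotv x x by rewrite lt_neqAle eq_sym hx0 dotv_ge0.
set s := Num.sqrt (dotv x x).
have spos : 0 < s by rewrite sqrtr_gt0.
have hss : s * s = dotv x x by rewrite -expr2 sqr_sqrtr ?dotv_ge0.
have hy : vnorm (s^-1 *: x) = 1.
  rewrite /vnorm dotvZl dotvZr -hss.
  have -> : s^-1 * (s^-1 * (s * s)) = 1.
    by field; rewrite gt_eqF.
  exact: sqrtr1.
have := key _ hy; rewrite -scalemxAr dotvZl dotvZr.
move=> h.
have -> : dotv x (H *m x) = s * s * (s^-1 * (s^-1 * dotv x (H *m x))).
  by field; rewrite gt_eqF.
rewrite hss.
rewrite subr_ge0; nra.
Qed.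

Lemma gd_closed (R : realType) n (H : 'M[R]_n.+1) (g : 'cV[R]_n.+1) a eta t :
  gd_iter H g (- a *: g) eta t = - (horner_mx H (cpoly a eta t) *m g).
Proof.
elim: t => [|t IH] /=; first by rewrite horner_mx_C mul_scalar_mx scaleNr.
rewrite IH /gradf rmorphD rmorphM rmorphB rmorph1 /= !horner_mx_C rmorphM /= horner_mx_C horner_mx_X.
rewrite -!mulmxE !mulmxDl mul1mx !mulNmx !mul_scalar_mx -!scalemxAl -!mulmxA mulmxN.
set X := horner_mx H (cpoly a eta t) *m g.
apply/matrixP=> i j; rewrite !mxE; ring.
Qed.

Lemma gradf_closed (R : realType) n (H : 'M[R]_n.+1) (g : 'cV[R]_n.+1) c :
  gradf H g (- (horner_mx H c *m g)) = horner_mx H (1 - 'X * c) *m g.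
Proof.
rewrite /gradf rmorphB rmorph1 rmorphM /= horner_mx_X -mulmxE mulmxBl mul1mx mulmxN mulmxA.
by rewrite addrC.
Qed.

Lemma dotv_hC (R : realType) n (H : 'M[R]_n.+1) k p x :
  dotv x (horner_mx H (k%:P * p) *m x) = k * dotv x (horner_mx H p *m x).
Proof.
by rewrite rmorphM /= horner_mx_C -mulmxE mul_scalar_mx -scalemxAl dotvZr.
Qed.

Lemma dotv_hD (R : realType) n (H : 'M[R]_n.+1) p q x :
  dotv x (horner_mx H (p + q) *m x) = dotv x (horner_mx H p *m x) + dotv x (horner_mx H q *m x).
Proof. by rewrite rmorphD /= mulmxDl dotvDr. Qed.

Lemma main_aux (R : realType) n (H : 'M[R]_n.+1) (g : 'cV[R]_n.+1) (a eta : R) t :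
  H^T = H -> 0 < eta -> eta < 1 / opnorm H -> 0 <= a ->
  dotv (- (horner_mx H (cpoly a eta t) *m g))
       (gradf H g (- (horner_mx H (cpoly a eta t) *m g))) <= 0 ->
  dotv (- (horner_mx H (cpoly a eta t) *m g))
       (H *m gradf H g (- (horner_mx H (cpoly a eta t) *m g)))
  >= opnorm H * dotv (- (horner_mx H (cpoly a eta t) *m g))
       (gradf H g (- (horner_mx H (cpoly a eta t) *m g))).
Proof.
move=> HS he hlt ha; rewrite gradf_closed.
have bpos := opnorm_pos he hlt.
have hb := opnorm_psd HS he hlt.
set b := opnorm H in bpos hb *.
set c := cpoly a eta t.
set C := horner_mx H c.
set r : {poly R} := 1 - eta%:P * 'X.
have heb : eta * b < 1.
  by move: hlt; rewrite mul1r -(ltr_pM2r bpos) mulVf ?gt_eqF.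
have hr1 : psdp H (r * 1).
  have -> : r * 1 = eta%:P * (b%:P - 'X) + (1 - eta * b)%:P * 1.
    by rewrite /r polyCB polyCM polyC1; ring.
  apply: psdD; apply: psdC; rewrite ?subr_ge0 ?ltW //; exact: psd1.
have hrb : psdp H (r * (b%:P - 'X)).
  have -> : r * (b%:P - 'X) = eta%:P * ((b%:P - 'X) * 1 * (b%:P - 'X)) + (1 - eta * b)%:P * (b%:P - 'X).
    by rewrite /r polyCB polyCM polyC1; ring.
  apply: psdD; apply: psdC; rewrite ?subr_ge0 ?ltW //; exact: psd_sq (psd1 _).
have hc1 := psd_c ha (ltW he) (psd_pow HS (psd1 H) hr1) t t.
have hcb := psd_c ha (ltW he) (psd_pow HS hb hrb) t t.
rewrite -/r -/c in hc1 hcb.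
have hu := u_closed a eta t; rewrite -/r -/c in hu.
have E1 : forall u : {poly R}, dotv (- (C *m g)) (horner_mx H u *m g) = - dotv g (horner_mx H (c * u) *m g).
  move=> u; rewrite dotvNl dotv_sym ?hmx_sym // rmorphM /= -mulmxE mulmxA //.
have E2 : forall u : {poly R}, dotv (- (C *m g)) (H *m (horner_mx H u *m g)) = - dotv g (horner_mx H (c * ('X * u)) *m g).
  move=> u; rewrite -E1 rmorphM /= horner_mx_X -mulmxE mulmxA //.
rewrite E1 E2 => hz.
rewrite -subr_ge0 mulrN opprK.
rewrite -dotv_hC -dotvNr -mulNmx -rmorphN /= -dotv_hD.
have -> : - (c * ('X * (1 - 'X * c))) + b%:P * (c * (1 - 'X * c)) = c * (b%:P - 'X) * (r ^+ t * (1 - a%:P * 'X)) by rewrite -hu; ring.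
have [hab|hab] := lerP (a * b) 1.
  have -> : c * (b%:P - 'X) * (r ^+ t * (1 - a%:P * 'X)) =
     a%:P * ((b%:P - 'X) * (c * r ^+ t * 1) * (b%:P - 'X)) + (1 - a * b)%:P * (c * r ^+ t * (b%:P - 'X)).
    by rewrite polyCB polyCM polyC1; ring.
  apply: psdD; apply: psdC => //; rewrite ?subr_ge0 //; exact: psd_sq.
have apos : 0 < a.
  rewrite lt_neqAle ha andbT; apply/negP => /eqP a0; move: hab; rewrite -a0 mul0r ltr10.
  by [].
rewrite -(pmulr_rge0 _ apos) -dotv_hC.
have -> : a%:P * (c * (b%:P - 'X) * (r ^+ t * (1 - a%:P * 'X))) =
   (1 - a%:P * 'X) * (c * r ^+ t * 1) * (1 - a%:P * 'X) + (a * b - 1)%:P * (c * (1 - 'X * c)).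
  by rewrite hu polyCB polyCM polyC1 /r; ring.
rewrite dotv_hD dotv_hC; apply: addr_ge0; first exact: psd_sq.
apply: mulr_ge0; first by rewrite subr_ge0 ltW.
by rewrite oppr_le0 in hz.
Qed.

Theorem lemma4 (R : realType) (n : nat) (H : 'M[R]_n) (g v1 : 'cV[R]_n)
  (lam eta alpha : R) (t : nat) :
  H^T = H ->
  (* lam = lambda_min(H) < 0, with unit eigenvector v1 *)
  eigenvalue H lam ->
  (forall mu : R, eigenvalue H mu -> lam <= mu) ->
  lam < 0 ->
  vnorm v1 = 1 ->
  H *m v1 = lam *: v1 ->
  dotv g v1 != 0 ->
  0 < eta -> eta < 1 / opnorm H ->
  0 < alpha -> alpha < 1 ->
  alpha * `|dotv g (H *m g)| < vnorm g ^+ 3 ->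
  (forall s : nat, (s <= t)%N ->
     vnorm (gd_iter H g (- (alpha / vnorm g) *: g) eta s) <= 1) ->
  dotv (gd_iter H g (- (alpha / vnorm g) *: g) eta t)
       (gradf H g (gd_iter H g (- (alpha / vnorm g) *: g) eta t)) <= 0 ->
  dotv (gd_iter H g (- (alpha / vnorm g) *: g) eta t)
       (H *m gradf H g (gd_iter H g (- (alpha / vnorm g) *: g) eta t))
  >= opnorm H * dotv (gd_iter H g (- (alpha / vnorm g) *: g) eta t)
       (gradf H g (gd_iter H g (- (alpha / vnorm g) *: g) eta t)).
Proof.
case: n H g v1 => [|n] H g v1 HS _ _ _ hv1 _ _ he hlt ha _ _ _.
  have v0 : v1 = 0 by apply/matrixP => [[]].
  by move: hv1; rewrite v0 /vnorm dotv0r sqrtr0 => /esym/eqP; rewrite oner_eq0.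
rewrite !gd_closed; apply: main_aux => //.
by apply: divr_ge0; [exact: ltW | exact: sqrtr_ge0].
Qed.
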